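(* Let $h,k\ge 2$ be integers and $w=a^hb^k$. For $n\ge1$ let $S_n = a^h(a^{2h}b^{2k})(aba^{h-1}b^{k-1})^{n}(a^{2h}b^{2k})b^k$. Then every $S_n$ belongs to $L^{\epsilon}_{\vdash_{\{w\}}}$ and for all $1\le i<j$ we have $S_i \not\vdash^*_{\{w\}} S_j$; in particular $\vdash^*_{\{w\}}$ is not a well quasi-order on $L^{\epsilon}_{\vdash_{\{w\}}}$.
   Context: For words $u,v$, the shuffle $u \sqcup\!\sqcup v$ is the set of all words $u_1v_1\cdots u_kv_k$ with $k\ge 1$, $u=u_1\cdots u_k$, $v=v_1\cdots v_k$ (pieces possibly empty). For a finite set $I$ of words, $v \vdash_I w$ means $w \in v \sqcup\!\sqcup u$ for some $u\in I$; $\vdash_I^*$ is its reflexive-transitive closure and $L^{\epsilon}_{\vdash_I}=\{w : \epsilon \vdash_I^* w\}$. A quasi-order $\le$ on $S$ is a well quasi-order iff every infinite sequence $s_1,s_2,\dots$ in $S$ has $i<j$ with $s_i\le s_j$. *)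

(* Defs.v *)
From HB Require Import structures.
From mathcomp Require Import all_boot.
From Stdlib Require Import Relations.Relation_Operators.
Set Implicit Arguments. Unset Strict Implicit. Unset Printing Implicit Defensive.

Inductive letter := la | lb.
Definition letter_eqb (x y : letter) : bool := match x, y with la, la | lb, lb => true | _, _ => false end.
Lemma letter_eqP : Equality.axiom letter_eqb. Proof. by case; case; constructor. Qed.
HB.instance Definition _ := hasDecEq.Build letter letter_eqP.
Definition word := seq letter.

(* w is in the shuffle of u and v: w = u_1 v_1 ... u_k v_k with k >= 1,
   u = u_1 ... u_k, v = v_1 ... v_k (pieces possibly empty).
   The pieces are recorded as the list p of pairs (u_i, v_i). *)
Definition in_shuffle (T : Type) (u v w : seq T) : Prop :=
  exists p : seq (seq T * seq T),
    0 < size p /\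
    u = flatten (map fst p) /\
    v = flatten (map snd p) /\
    w = flatten (map (fun x => x.1 ++ x.2) p).

Definition derives (I : seq word) (v w : word) : Prop :=
  exists u, u \in I /\ in_shuffle v u w.

Definition derives_star (I : seq word) : word -> word -> Prop :=
  clos_refl_trans word (derives I).

Definition L_eps (I : seq word) (w : word) : Prop := derives_star I [::] w.

Definition wqo_on (X : Type) (S : X -> Prop) (R : X -> X -> Prop) : Prop :=
  (forall x, S x -> R x x) /\
  (forall x y z, S x -> S y -> S z -> R x y -> R y z -> R x z) /\
  (forall s : nat -> X, (forall n, S (s n)) ->
     exists i j, (i < j)%N /\ R (s i) (s j)).

Definition pw (h k : nat) : word := nseq h la ++ nseq k lb.

Definition Sn (h k n : nat) : word :=
  nseq h la ++ (nseq (2 * h) la ++ nseq (2 * k) lb) ++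
  flatten (nseq n ([:: la; lb] ++ nseq h.-1 la ++ nseq k.-1 lb)) ++
  (nseq (2 * h) la ++ nseq (2 * k) lb) ++ nseq k lb.

(* Main.v *)
Require Import Defs.
From mathcomp Require Import all_boot.
From mathcomp Require Import zify.
From Stdlib Require Import Relations.Relation_Operators.
Set Implicit Arguments. Unset Strict Implicit. Unset Printing Implicit Defensive.

Inductive sh : word -> word -> word -> Prop :=
| sh_nil : sh [::] [::] [::]
| sh_l c u v x : sh u v x -> sh (c :: u) v (c :: x)
| sh_r c u v x : sh u v x -> sh u (c :: v) (c :: x).

Lemma sh_count (P : pred letter) u v x : sh u v x -> count P x = count P u + count P v.
Proof. elim=> //= c u' v' x' _ ->; [by rewrite addnA | by rewrite addnCA]. Qed.

Lemma sh_size u v x : sh u v x -> size x = size u + size v.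
Proof. elim=> //= c u' v' x' _ ->; [by rewrite addSn | by rewrite addnS]. Qed.

Lemma sh_inv_nil u v : sh u v [::] -> u = [::] /\ v = [::].
Proof. by move=> H; inversion H. Qed.

Lemma sh_inv_cons u v c x : sh u v (c :: x) ->
  (exists u', u = c :: u' /\ sh u' v x) \/ (exists v', v = c :: v' /\ sh u v' x).
Proof. move=> H; inversion H; subst; [left|right]; eauto. Qed.

Lemma sh_nil_r x u : sh u [::] x -> u = x.
Proof.
elim: x u => [|c x IH] u H; first by case: (sh_inv_nil H).
case: (sh_inv_cons H) => [[u' [-> H']]|[v' [E _]]] //.
by rewrite (IH _ H').
Qed.

Lemma sh_nil_l x v : sh [::] v x -> v = x.
Proof.
elim: x v => [|c x IH] v H; first by case: (sh_inv_nil H).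
case: (sh_inv_cons H) => [[u' [E _]]|[v' [-> H']]] //.
by rewrite (IH _ H').
Qed.

Lemma sh_appl x u v w : sh u v w -> sh (x ++ u) v (x ++ w).
Proof. by elim: x => //= c x IH H; apply: sh_l; apply: IH. Qed.

Lemma sh_appr x u v w : sh u v w -> sh u (x ++ v) (x ++ w).
Proof. by elim: x => //= c x IH H; apply: sh_r; apply: IH. Qed.

Lemma sh_idl x : sh x [::] x.
Proof. by have := sh_appl x sh_nil; rewrite cats0. Qed.

Lemma split_x x1 x2 u v : sh u v (x1 ++ x2) -> exists u1 u2 v1 v2,
  u = u1 ++ u2 /\ v = v1 ++ v2 /\ sh u1 v1 x1 /\ sh u2 v2 x2.
Proof.
elim: x1 u v => [|c x1 IH] u v H.
  by exists [::], u, [::], v; split; [|split; [|split; [apply: sh_nil|]]].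
case: (sh_inv_cons H) => [[u' [-> H']]|[v' [-> H']]].
  have [u1 [u2 [v1 [v2 [-> [-> [H1 H2]]]]]]] := IH _ _ H'.
  by exists (c :: u1), u2, v1, v2; split; [|split; [|split; [apply: sh_l|]]].
have [u1 [u2 [v1 [v2 [-> [-> [H1 H2]]]]]]] := IH _ _ H'.
by exists u1, u2, (c :: v1), v2; split; [|split; [|split; [apply: sh_r|]]].
Qed.

Lemma split_v v1 v2 z x : sh (v1 ++ v2) z x -> exists x1 x2 z1 z2,
  x = x1 ++ x2 /\ z = z1 ++ z2 /\ sh v1 z1 x1 /\ sh v2 z2 x2.
Proof.
case: v1 => [|d v1] H.
  by exists [::], x, [::], z; split; [|split; [|split; [apply: sh_nil|]]].
elim: x z d v1 H => [|c x IH] z d v1 H; first by case: (sh_inv_nil H).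
case: (sh_inv_cons H) => [[u' [[<- E] H']]|[v' [-> H']]].
  subst u'. clear H. case: v1 H' => [|d' v1] H'.
    by exists [:: d], x, [::], z; split; [|split; [|split; [apply: sh_l; apply: sh_nil|]]].
  have [x1 [x2 [z1 [z2 [-> [-> [H1 H2]]]]]]] := IH _ _ _ H'.
  by exists (d :: x1), x2, z1, z2; split; [|split; [|split; [apply: sh_l|]]].
have [x1 [x2 [z1 [z2 [-> [-> [H1 H2]]]]]]] := IH _ _ _ H'.
by exists (c :: x1), x2, (c :: z1), z2; split; [|split; [|split; [apply: sh_r|]]].
Qed.

Lemma sh_assoc v z1 x z2 y : sh v z1 x -> sh x z2 y -> exists z, sh z1 z2 z /\ sh v z y.
Proof.
move=> H1 H2; elim: H2 v z1 H1 => [|c x' z2' y' H IH|c x' z2' y' H IH] v z1 H1.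
- have [-> ->] := sh_inv_nil H1; exists [::]; split; exact: sh_nil.
- case: (sh_inv_cons H1) => [[v' [-> H']]|[z1' [-> H']]].
    have [z [Ha Hb]] := IH _ _ H'; exists z; split => //; exact: sh_l.
  have [z [Ha Hb]] := IH _ _ H'; exists (c :: z); split; [exact: sh_l | exact: sh_r].
- have [z [Ha Hb]] := IH _ _ H1; exists (c :: z); split; [exact: sh_r | exact: sh_r].
Qed.

Lemma flat_sh (p : seq (word * word)) :
  sh (flatten (map fst p)) (flatten (map snd p)) (flatten (map (fun x => x.1 ++ x.2) p)).
Proof.
elim: p => [|[a b] p IH] /=; first exact: sh_nil.
rewrite -catA; apply: sh_appl; exact: sh_appr.
Qed.

Lemma in_shuffle_sh v u x : in_shuffle v u x -> sh v u x.
Proof. by case=> p [_ [-> [-> ->]]]; apply: flat_sh. Qed.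

Lemma cat_eq_cat (x1 x2 y1 y2 : word) : x1 ++ x2 = y1 ++ y2 ->
  (exists l, x1 = y1 ++ l /\ y2 = l ++ x2) \/ (exists l, y1 = x1 ++ l /\ x2 = l ++ y2).
Proof.
elim: x1 y1 => [|a x1 IH] [|b y1] /= E.
- by right; exists [::].
- by right; exists (b :: y1).
- by left; exists (a :: x1).
- case: E => <- E; case: (IH _ E) => [[l [-> ->]]|[l [-> ->]]].
    by left; exists l.
  by right; exists l.
Qed.

Lemma catl_inj (s a b : word) : s ++ a = s ++ b -> a = b.
Proof. by elim: s => //= c s IH [] /IH. Qed.

Lemma catr_inj (s a b : word) : a ++ s = b ++ s -> a = b.
Proof.
move=> E; have := congr1 rev E; rewrite !rev_cat => /catl_inj E'.
by rewrite -(revK a) E' revK.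
Qed.

Definition na (s : word) := count (pred1 la) s.
Definition nb (s : word) := count (pred1 lb) s.

Lemma na_cat s t : na (s ++ t) = na s + na t. Proof. exact: count_cat. Qed.
Lemma nb_cat s t : nb (s ++ t) = nb s + nb t. Proof. exact: count_cat. Qed.
Lemma na_A n : na (nseq n la) = n. Proof. by rewrite /na count_nseq /= mul1n. Qed.
Lemma na_B n : na (nseq n lb) = 0. Proof. by rewrite /na count_nseq /= mul0n. Qed.
Lemma nb_A n : nb (nseq n la) = 0. Proof. by rewrite /nb count_nseq /= mul0n. Qed.
Lemma nb_B n : nb (nseq n lb) = n. Proof. by rewrite /nb count_nseq /= mul1n. Qed.
Lemma na_cons c s : na (c :: s) = (c == la) + na s. Proof. by []. Qed.
Lemma nb_cons c s : nb (c :: s) = (c == lb) + nb s. Proof. by []. Qed.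
Lemma na_nil : na [::] = 0. Proof. by []. Qed.
Lemma nb_nil : nb [::] = 0. Proof. by []. Qed.

Lemma size_nab s : size s = na s + nb s.
Proof. elim: s => //= -[] s IH; rewrite /na /nb /= in IH *; lia. Qed.

Lemma na0 s : na s = 0 -> s = nseq (size s) lb.
Proof. by elim: s => //= -[] s IH; rewrite /na /= -/(na s) => // /IH {1}->. Qed.

Lemma nb0 s : nb s = 0 -> s = nseq (size s) la.
Proof. by elim: s => //= -[] s IH; rewrite /nb /= -/(nb s) => // /IH {1}->. Qed.

Lemma sh_na u v x : sh u v x -> na x = na u + na v. Proof. exact: sh_count. Qed.
Lemma sh_nb u v x : sh u v x -> nb x = nb u + nb v. Proof. exact: sh_count. Qed.

Definition Qa (k : nat) (z : word) := forall z1 z2, z = z1 ++ la :: z2 -> k <= nb z2.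
Definition Pw (h k : nat) (z : word) := forall z1 z2, z = z1 ++ z2 -> h * nb z1 <= k * na z1.
Definition G h k z := Qa k z /\ Pw h k z.

Lemma G_sh h k z1 z2 z : G h k z1 -> G h k z2 -> sh z1 z2 z -> G h k z.
Proof.
move=> [Qa1 Pw1] [Qa2 Pw2] H; split.
  move=> y1 y2 E; subst z.
  have [u1 [u2 [v1 [v2 [E1 [E2 [H1 H2]]]]]]] := split_x H.

  case: (sh_inv_cons H2) => [[u' [E3 H3]]|[v' [E3 H3]]]; subst.
    have := Qa1 _ _ (erefl _); rewrite (sh_nb H3); lia.
  have := Qa2 _ _ (erefl _); rewrite (sh_nb H3); lia.
move=> y1 y2 E; subst z.
have [u1 [u2 [v1 [v2 [E1 [E2 [H1 H2]]]]]]] := split_x H.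
have := Pw1 _ _ E1; have := Pw2 _ _ E2.
rewrite (sh_na H1) (sh_nb H1); nia.
Qed.

Lemma G_w h k : G h k (pw h k).
Proof.
split.
  move=> z1 z2 /esym/cat_eq_cat [[l [E1 E2]]|[l [E1 E2]]].
    have : la \in nseq k lb by rewrite E2 mem_cat inE eqxx orbT.
    by rewrite mem_nseq andbF.
  have := congr1 nb E2; rewrite nb_cons nb_cat nb_B /=; lia.
move=> z1 z2 /esym/cat_eq_cat [[l [E1 E2]]|[l [E1 E2]]].
  subst z1. rewrite na_cat nb_cat na_A nb_A.
  have : nb l <= k.
    have := congr1 size E2; rewrite size_nseq size_cat (size_nab l); lia.
  nia.
have := congr1 nb E1; rewrite nb_cat nb_A; lia.
Qed.

Lemma G_nil h k : G h k [::].
Proof. split; first by case. by case=> //= [[] //] ; rewrite !muln0. Qed.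

Lemma star_inv h k v x : derives_star [:: pw h k] v x -> exists z, G h k z /\ sh v z x.
Proof.
elim=> [v' x' [u [Hu Hs]]|v'|v' x' y' _ [z1 [G1 S1]] _ [z2 [G2 S2]]].
- move: Hu; rewrite inE => /eqP Eu; subst u; exists (pw h k); split; [exact: G_w|exact: in_shuffle_sh].
- exists [::]; split; [exact: G_nil|exact: sh_idl].
- have [z [Sz Sv]] := sh_assoc S1 S2; exists z; split => //; exact: G_sh Sz.
Qed.

Definition Blk h k : word := [:: la; lb] ++ nseq h.-1 la ++ nseq k.-1 lb.
Definition M h k n : word := flatten (nseq n (Blk h k)).
Definition T h k n : word := nseq (2 * k) lb ++ M h k n ++ nseq (2 * h) la ++ nseq (3 * k) lb.

Lemma flatten_nseqS (x : word) n : flatten (nseq n.+1 x) = flatten (nseq n x) ++ x.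
Proof. elim: n => /= [|n IH]; first by rewrite cats0. by rewrite -catA -IH. Qed.

Lemma M_S h k n : M h k n.+1 = M h k n ++ Blk h k.
Proof. exact: flatten_nseqS. Qed.

Lemma na_Blk h k : 1 <= h -> na (Blk h k) = h.
Proof. move=> hh; rewrite /Blk !na_cat na_A na_B /=; lia. Qed.
Lemma nb_Blk h k : 1 <= k -> nb (Blk h k) = k.
Proof. move=> hk; rewrite /Blk !nb_cat nb_A nb_B /=; lia. Qed.

Lemma na_M h k n : 1 <= h -> na (M h k n) = n * h.
Proof. move=> hh; elim: n => // n IH; rewrite M_S na_cat na_Blk // IH; lia. Qed.
Lemma nb_M h k n : 1 <= k -> nb (M h k n) = n * k.
Proof. move=> hk; elim: n => // n IH; rewrite M_S nb_cat nb_Blk // IH; lia. Qed.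


Lemma M_pref h k n p q : 1 <= h -> 1 <= k -> p ++ q = M h k n -> k * na p <= h * nb p + h * k.
Proof.
move=> hh hk; elim: n p q => [|n IH] p q.
  move=> E; have -> : p = [::] by move: E; case: p.
  rewrite na_nil nb_nil; lia.
rewrite (_ : M h k n.+1 = Blk h k ++ M h k n) // => /esym/cat_eq_cat [[l [E1 E2]]|[l [E1 E2]]].
  have : na p <= h by rewrite -(na_Blk k hh) E1 na_cat; lia.
  nia.
subst p; have := IH _ _ (esym E2); rewrite na_cat nb_cat na_Blk // nb_Blk //; nia.
Qed.

Lemma Sn_eq h k n : Sn h k n = nseq (3 * h) la ++ T h k n.
Proof.
rewrite /Sn /T /M /Blk (_ : 3 * h = h + 2 * h) ?nseqD; last lia.
by rewrite /= !cats0 !catA.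
Qed.

Lemma T_pref h k n p q : 1 <= h -> 1 <= k -> p ++ q = T h k n ->
  k * na p <= h * nb p /\ (k * na p = h * nb p -> p = [::] \/ q = nseq (3 * k) lb).
Proof.
move=> hh hk /esym/cat_eq_cat [[l [E1 E2]]|[l [E1 E2]]].
  have Ea : na p = 0 by have := congr1 na E1; rewrite na_cat na_B; lia.
  rewrite Ea muln0; split; first lia.
  move=> /esym/eqP; rewrite muln_eq0 => /orP [/eqP h0|/eqP Eb]; first lia.
  left; apply/size0nil; rewrite size_nab; lia.
subst p; move/esym: E2 => /cat_eq_cat [[l2 [E1 E2]]|[l2 [E1 E2]]]; last first.
  have := M_pref hh hk (esym E1).
  rewrite !na_cat !nb_cat na_B nb_B; split; nia.
subst l; move/esym: E2 => /cat_eq_cat [[l3 [E1 E2]]|[l3 [E1 E2]]]; last first.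
  have Eb : nb l2 = 0 by have := congr1 nb E1; rewrite nb_cat nb_A; lia.
  have Sa : na l2 <= 2 * h by have := congr1 na E1; rewrite na_cat na_A; lia.
  rewrite !na_cat !nb_cat na_B nb_B na_M // nb_M // Eb; split; first nia.
  move=> Eq; right.
  have E3 : na l2 = 2 * h by nia.
  have : size l3 = 0.
    have := congr1 size E1; rewrite size_cat size_nseq (size_nab l2); lia.
  by move/size0nil => l30; rewrite E2 l30.
subst l2.
have Ea : na l3 = 0 by have := congr1 na E2; rewrite na_cat na_B; lia.
rewrite !na_cat !nb_cat na_B nb_B na_M // nb_M // na_A nb_A Ea; split; first nia.
move=> Eq; right.
have Eb : nb l3 = 0 by nia.
have l30 : l3 = [::] by apply/size0nil; rewrite size_nab; lia.
by rewrite E2 l30.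
Qed.

Lemma Qa_suffix k (p s : word) : Qa k (p ++ s) -> Qa k s.
Proof. by rewrite /Qa => H z1 z2 E; apply: (H (p ++ z1)); rewrite E -catA. Qed.

Lemma last_nseqS (x y : letter) n : last x (nseq n.+1 y) = y.
Proof. by elim: n x => //= n IH x; apply: IH. Qed.

Lemma nb_le_size s : nb s <= size s.
Proof. rewrite size_nab; lia. Qed.

Lemma M_neg h k : 2 <= h -> 2 <= k -> forall j i z, i < j -> Qa k z -> ~ sh (M h k i) z (M h k j).
Proof.
move=> hh hk; elim=> [|j IH] i z // Hij Qz.
rewrite M_S /Blk => H.
set A' := nseq h.-1 la in H; set B' := nseq k.-1 lb in H.
rewrite (_ : M h k j ++ [:: la; lb] ++ A' ++ B' = (M h k j ++ [:: la; lb]) ++ A' ++ B') in H;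
  last by rewrite !catA.
have [u1 [u2 [v1 [v2 [Ei [Ez [H1 H2]]]]]]] := split_x H.
have [u21 [u22 [v21 [v22 [Eu2 [Ev2 [H21 H22]]]]]]] := split_x H2.
have v210 : v21 = [::].
  case: v21 H21 Ev2 => // c r H21 Ev2.
  have : nb (c :: r) = 0 by have := sh_nb H21; rewrite /A' nb_A; lia.
  case: c H21 Ev2 => //= H21 Ev2 Enb.
  have := Qz v1 (r ++ v22); rewrite Ez Ev2 => /(_ erefl).
  rewrite nb_cat; have := nb_le_size v22; have := sh_size H22; rewrite size_nseq.
  rewrite /nb /= in Enb; rewrite -/(nb r) in Enb. lia.
subst v21.
have Eu21 := sh_nil_r H21; subst u21.
have Eu22 : u22 = nseq (size u22) lb by apply: na0; have := sh_na H22; rewrite /B' na_B; lia.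
have Sz := sh_size H22; rewrite size_nseq in Sz.
clear H; case: i Ei Hij => [|i'] Ei Hij.
  by have := congr1 size Ei; rewrite Eu2 /M /= !size_cat /A' size_nseq; lia.
move: Ei; rewrite M_S /Blk -/A' -/B' Eu2 Eu22.
have [d Ed] : exists d, k.-1 = d + size u22 by exists (k.-1 - size u22); rewrite subnK // Sz leq_addr.
rewrite /B' Ed nseqD !catA => /catr_inj.
case: d Ed => [|d] Ed; last first.
  move/(congr1 (last la)); rewrite !last_cat last_nseqS /A'.
  by rewrite (_ : h.-1 = (h - 2).+1) ?last_nseqS //; lia.
rewrite /= cats0 => /catr_inj Ei; subst u1.
have v220 : v22 = [::] by apply/size0nil; lia.
subst v22 v2; rewrite /= cats0 in Ez; subst v1.
have [w1 [w2 [y1 [y2 [Ew [Ey [G1 G2]]]]]]] := split_x H1.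
case: (sh_inv_cons G2) => [[w2' [Ew2 G3]]|[y2' [Ey2 G3]]]; last first.
  have := Qz y1 y2'; rewrite Ey Ey2 => /(_ erefl).
  have := nb_le_size y2'; have := sh_size G3; rewrite /=; lia.
case: (sh_inv_cons G3) => [[w2'' [Ew2' G4]]|[y2'' [Ey2' G4]]].
  have [E5 E6] := sh_inv_nil G4; subst.
  have Ew1 : w1 = M h k i' by apply: (@catr_inj [:: la; lb]); rewrite -Ew.
  subst w1; rewrite cats0 in Qz.
  exact: (IH i' y1 Hij Qz G1).
have [E5 E6] := sh_inv_nil G4; subst.
by move/(congr1 (last la)): Ew; rewrite !last_cat /=.
Qed.

Lemma size_T h k n : 1 <= h -> 1 <= k -> size (T h k n) = 2 * k + n * (h + k) + 2 * h + 3 * k.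
Proof.
move=> hh hk; rewrite /T !size_cat !size_nseq size_nab na_M // nb_M //; lia.
Qed.

Lemma neg h k i j z : 2 <= h -> 2 <= k -> i < j -> G h k z -> ~ sh (Sn h k i) z (Sn h k j).
Proof.
move=> hh hk Hij [Qz Pz]; rewrite !Sn_eq => H.
have h1 : 0 < h by lia. have k1 : 0 < k by lia.
have [x1 [x2 [z1 [z2 [Ex [Ez [H1 H2]]]]]]] := split_v H.
have P1 := Pz z1 z2 Ez.
have Na := sh_na H1; have Nb := sh_nb H1; rewrite na_A nb_A in Na Nb.
have Sx1 := sh_size H1; rewrite size_nseq in Sx1.
have [z10 Ex2] : z1 = [::] /\ x2 = T h k j.
  case: (cat_eq_cat Ex) => [[l [E1 E2]]|[l [E1 E2]]]; last first.
    subst x1; rewrite na_cat nb_cat na_A nb_A in Na Nb.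
    have [T1 T2] := T_pref h1 k1 (esym E2).
    have Eq : k * na l = h * nb l by nia.
    case: (T2 Eq) => [l0|x2E].
      subst l; split; last by rewrite E2.
      by apply/size0nil; rewrite size_nab; rewrite na_nil nb_nil in Na Nb; lia.
    exfalso; have := sh_size H2; rewrite x2E size_nseq size_T //; nia.
  have : size x1 <= 3 * h by have := congr1 size E1; rewrite size_cat size_nseq; lia.
  move=> Sx; have z10 : z1 = [::] by apply/size0nil; lia.
  split => //; subst z1.
  have : size l = 0 by have := congr1 size E1; rewrite size_cat size_nseq; lia.
  by move/size0nil => l0; rewrite E2 l0.
subst z1 x2; rewrite /= in Ez; subst z2.
move: H2; rewrite /T (_ : forall a b c d : word, a ++ b ++ c ++ d = (a ++ b ++ c) ++ d);
  last by move=> a b c d; rewrite !catA.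
move=> H2.
have [x1' [x2' [z1 [z2 [Ex' [Ez' [H3 H4]]]]]]] := split_v H2.
have P2 := Pz z1 z2 Ez'.
have Na3 := sh_na H3; have Nb3 := sh_nb H3.
rewrite !na_cat !nb_cat na_A nb_A na_B nb_B na_M ?nb_M in Na3 Nb3; try lia.
have [T1 T2] := @T_pref h k j x1' x2' h1 k1 (esym Ex').
have Eq : k * na x1' = h * nb x1' by rewrite Na3 Nb3; nia.
case: (T2 Eq) => [x10|x2E].
  by have := sh_size H3; rewrite x10 !size_cat !size_nseq /=; lia.
have z20 : z2 = [::] by apply/size0nil; have := sh_size H4; rewrite x2E size_nseq; lia.
subst z2 x2'; rewrite cats0 in Ez'; subst z1.
have Ex1 : x1' = nseq (2 * k) lb ++ M h k j ++ nseq (2 * h) la.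
  by apply: (@catr_inj (nseq (3 * k) lb)); rewrite -Ex' !catA.
subst x1'; clear H2 H4 Ex' Na3 Nb3 T1 T2 Eq.
have [u1 [u2 [v1 [v2 [Eu [Ev [H5 H6]]]]]]] := split_x H3.
have v10 : v1 = [::].
  have := sh_na H5; rewrite na_B => Na5.
  have := Pz v1 v2 Ev => Pv.
  apply/size0nil; rewrite size_nab; nia.
subst v1; rewrite /= in Ev; subst v2.
have := sh_nil_r H5 => Eu1; subst u1.
have {}Eu := catl_inj Eu; subst u2.
have [u1 [u2 [v1 [v2 [Eu [Ev [H7 H8]]]]]]] := split_x H6.
have v20 : v2 = [::].
  case: v2 H8 Ev => // c r H8 Ev.
  have := sh_nb H8; rewrite nb_A => Nb8.
  case: c H8 Ev Nb8 => // H8 Ev Nb8; last by rewrite /nb /= in Nb8; lia.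
  have := Qz v1 r; rewrite Ev => /(_ erefl).
  rewrite /nb /= -/(nb r) in Nb8; lia.
subst v2; rewrite cats0 in Ev; subst v1.
have := sh_nil_r H8 => Eu2; subst u2.
have {}Eu := catr_inj Eu; subst u1.
exact: (M_neg hh hk Hij Qz H7).
Qed.

Lemma nseq_m2 m n (x : letter) s : nseq m x ++ nseq n x ++ s = nseq (m + n) x ++ s.
Proof. by rewrite catA nseqD. Qed.
Lemma nseq_m1 m n (x : letter) : nseq m x ++ nseq n x = nseq (m + n) x.
Proof. by rewrite nseqD. Qed.
Lemma cons_n (x : letter) s : x :: s = nseq 1 x ++ s.
Proof. by []. Qed.

Ltac nrm := rewrite ?cats0 -?catA ?cons_n -?catA ?nseq_m2 ?nseq_m1 ?nseq_m2 ?nseq_m1 ?nseq_m2 ?nseq_m1 ?cats0.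

Lemma der h k v x (p : seq (word * word)) : 0 < size p ->
  v = flatten (map fst p) -> pw h k = flatten (map snd p) ->
  x = flatten (map (fun x => x.1 ++ x.2) p) -> derives [:: pw h k] v x.
Proof. by move=> *; exists (pw h k); split; [rewrite inE | exists p]. Qed.

Ltac fin := repeat (first [reflexivity | congr (_ ++ _) | congr nseq]); lia.

Definition W1 h k : word := nseq (2 * h) la ++ nseq (2 * k) lb.
Definition W3 h k : word := nseq (2 * h) la ++ nseq (k + 1) lb ++ nseq (2 * h) la ++ nseq (3 * k - 1) lb.
Definition Q h k m : word := nseq (3 * h) la ++ nseq (2 * k) lb ++ M h k m ++ [:: lb] ++ nseq (2 * h) la ++ nseq (3 * k - 1) lb.

Lemma s0 h k : derives [:: pw h k] [::] (pw h k).
Proof. by apply: (@der _ _ _ _ [:: ([::], pw h k)]) => //=; rewrite cats0. Qed.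

Lemma s1 h k : 1 <= h -> 1 <= k -> derives [:: pw h k] (pw h k) (W1 h k).
Proof.
move=> hh hk.
apply: (@der _ _ _ _ [:: (nseq h la, nseq h la); (nseq k lb, nseq k lb)]) => //=; rewrite /W1 /pw; nrm; fin.
Qed.

Lemma s2 h k : 1 <= h -> 1 <= k -> derives [:: pw h k] (W1 h k) (pw h k ++ W1 h k).
Proof.
move=> hh hk.
by apply: (@der _ _ _ _ [:: ([::], pw h k); (W1 h k, [::])]) => //=; rewrite !cats0.
Qed.

Lemma s3 h k : 1 <= h -> 1 <= k -> derives [:: pw h k] (pw h k ++ W1 h k) (W3 h k).
Proof.
move=> hh hk.
apply: (@der _ _ _ _ [:: (nseq h la, nseq h la); (nseq k lb, [:: lb]); (nseq (2 * h) la, [::]);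
   (nseq (2 * k) lb, nseq (k - 1) lb)]) => //=; rewrite /W1 /W3 /pw; nrm; fin.
Qed.

Lemma s4 h k : 1 <= h -> 1 <= k -> derives [:: pw h k] (W3 h k) (Q h k 0).
Proof.
move=> hh hk.
apply: (@der _ _ _ _ [:: (nseq (2 * h) la, nseq h la); (nseq (k + 1) lb, nseq k lb);
   (nseq (2 * h) la ++ nseq (3 * k - 1) lb, [::])]) => //=; rewrite /W3 /Q /M /= /pw; nrm; fin.
Qed.

Lemma s5 h k m : 1 <= h -> 1 <= k -> derives [:: pw h k] (Q h k m) (Q h k m.+1).
Proof.
move=> hh hk.
apply: (@der _ _ _ _ [:: (nseq (3 * h) la ++ nseq (2 * k) lb ++ M h k m, [:: la]);
   ([:: lb], nseq (h - 1) la ++ nseq (k - 1) lb ++ [:: lb]);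
   (nseq (2 * h) la ++ nseq (3 * k - 1) lb, [::])]) => //=;
  rewrite /Q ?M_S /Blk /pw; nrm; fin.
Qed.

Lemma s6 h k m : 1 <= h -> 1 <= k -> derives [:: pw h k] (Q h k m) (Sn h k m.+1).
Proof.
move=> hh hk.
apply: (@der _ _ _ _ [:: (nseq (3 * h) la ++ nseq (2 * k) lb ++ M h k m, [:: la]);
   ([:: lb], nseq (h - 1) la ++ nseq (k - 1) lb);
   (nseq (2 * h) la, [:: lb]); (nseq (3 * k - 1) lb, [::])]) => //=;
  rewrite ?Sn_eq /T /Q ?M_S /Blk /pw; nrm; fin.
Qed.

Lemma pos h k n : 2 <= h -> 2 <= k -> 1 <= n -> L_eps [:: pw h k] (Sn h k n).
Proof.
move=> hh hk; case: n => // m _.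
have h1 : 0 < h by lia. have k1 : 0 < k by lia.
have HQ : forall m, derives_star [:: pw h k] [::] (Q h k m).
  elim=> [|m' IH].
    apply: rt_trans (rt_step _ _ _ _ (s4 h1 k1)).
    apply: rt_trans (rt_step _ _ _ _ (s3 h1 k1)).
    apply: rt_trans (rt_step _ _ _ _ (s2 h1 k1)).
    apply: rt_trans (rt_step _ _ _ _ (s1 h1 k1)).
    exact: rt_step (s0 h k).
  exact: rt_trans IH (rt_step _ _ _ _ (s5 m' h1 k1)).
exact: rt_trans (HQ m) (rt_step _ _ _ _ (s6 m h1 k1)).
Qed.

Theorem proposition1 (h k : nat) (hh : (2 <= h)%N) (hk : (2 <= k)%N) :
  (forall n, (1 <= n)%N -> L_eps [:: pw h k] (Sn h k n)) /\
  (forall i j, (1 <= i)%N -> (i < j)%N ->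
     ~ derives_star [:: pw h k] (Sn h k i) (Sn h k j)) /\
  ~ wqo_on (L_eps [:: pw h k]) (derives_star [:: pw h k]).
Proof.
have P1 : forall n, (1 <= n)%N -> L_eps [:: pw h k] (Sn h k n).
  by move=> n; apply: pos.
have P2 : forall i j, (1 <= i)%N -> (i < j)%N ->
     ~ derives_star [:: pw h k] (Sn h k i) (Sn h k j).
  move=> i j _ Hij /star_inv [z [Gz Hs]].
  exact: (neg hh hk Hij Gz Hs).
split => //; split => //.
case=> _ [_ H].
have [i [j [Hij D]]] := H (fun n => Sn h k n.+1) (fun n => P1 n.+1 erefl).
exact: (P2 i.+1 j.+1 erefl Hij D).
Qed.
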